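(* Let $I$, $\tilde I$, $h$, $h_A$ and the rules $\Rightarrow_t$, $\Rightarrow_e$ (for an arbitrary choice of nonempty witness sets) be as in the context. Let $\tilde\pi=\tilde s_1\to\tilde s_2\to\cdots\to\tilde s_n$ be a path in $\tilde I$ whose edges are temporal transitions $\tilde s_k\xrightarrow{\tilde\alpha_{k+1}}\tilde s_{k+1}$ or epistemic transitions $\tilde s_k\sim_a\tilde s_{k+1}$. If $st_1\subseteq h^{-1}(\tilde s_1)$ and $(\tilde\pi,st_1)\Rightarrow^*(\tilde s_n,st_n)$ with $st_n\neq\emptyset$, then there is a sequence of concrete states $s_1,\dots,s_n$ with $s_1\in st_1$, $s_n\in st_n$, $h(s_k)=\tilde s_k$ for all $k$, such that for each edge: if it is $\tilde s_k\xrightarrow{\tilde\alpha_{k+1}}\tilde s_{k+1}$ then $\tau(\alpha_{k+1},s_k)=s_{k+1}$ for some $\alpha_{k+1}$ with $h_A(\alpha_{k+1})=\tilde\alpha_{k+1}$, and if it is $\tilde s_k\sim_a\tilde s_{k+1}$ then $l_a(s_k)=l_a(s_{k+1})$ and $s_{k+1}$ is reachable in $I$.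
   Context: $I$ and $\tilde I$ are interpreted systems over the same agents (global states $S,\tilde S$ with $l_a(s)$ the local state of agent $a$; initial states $S_0,\tilde S_0$; partial transition functions $\tau,\tilde\tau$); a state of $I$ is reachable if obtained from $S_0$ by finitely many transitions. $h:S\to\tilde S$ and $h_A:ACT\to\widetilde{ACT}$ are given functions. For $st\subseteq S$ let $L_a(st)=\{l_a(s)\mid s\in st\}$ and $\Theta_\alpha(st)=\{\tau(\alpha,s)\mid s\in st,\ \tau(\alpha,s)\text{ defined}\}$. Paths in $\tilde I$ are written with first edge followed by the rest: $e\,\|\,\pi$; a path of length zero is a state. Rule TemporalCheck: $(\tilde s\xrightarrow{\tilde\alpha}\tilde s'\,\|\,\pi,st)\Rightarrow_t(\pi,\bigcup_{\alpha\in h_A^{-1}(\tilde\alpha)}\Theta_\alpha(st)\cap h^{-1}(\tilde s'))$; $\Rightarrow_t^*$ is a finite sequence of such steps. Rule EpistemicCheck: for each abstract state $\tilde s'$ fix a nonempty set $W_{\tilde s'}$ of witness paths, each a temporal path $\pi'=\tilde s'_0\xrightarrow{\tilde\alpha'_1}\cdots\xrightarrow{\tilde\alpha'_m}\tilde s'$ of $\tilde I$ with $\tilde s'_0\in\tilde S_0$; let $st'=\bigcup_{\pi'\in W_{\tilde s'}}\{X\mid (\pi',S_0\cap h^{-1}(\tilde s'_0))\Rightarrow_t^*(\tilde s',X)\}$; then $(\tilde s\sim_a\tilde s'\,\|\,\pi,st)\Rightarrow_e(\pi,\hat{st})$ where $\hat{st}=\{s\in st'\mid l_a(s)\in L_a(st)\}$.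 $\Rightarrow^*$ denotes a finite sequence of $\Rightarrow_t$ and $\Rightarrow_e$ steps. *)

(* Defs.v *)
From Stdlib Require Import List.
Import ListNotations.
Set Implicit Arguments.

Record IS (Ag : Type) := mkIS {
  St : Type;
  Loc : Type;
  Act : Type;
  loc : Ag -> St -> Loc;
  init : St -> Prop;
  tr : Act -> St -> option St
}.
Arguments St {Ag} i.
Arguments Loc {Ag} i.
Arguments Act {Ag} i.
Arguments loc {Ag} i _ _.
Arguments init {Ag} i _.
Arguments tr {Ag} i _ _.

Inductive reachable {Ag} (I : IS Ag) : St I -> Prop :=
| reach_init : forall s, init I s -> reachable I s
| reach_step : forall s a s', reachable I s -> tr I a s = Some s' -> reachable I s'.

Section Paths.
Context {Ag : Type} (J : IS Ag).

Inductive edge : Type :=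
| ETemp (a : Act J) (t : St J)
| EEpi (ag : Ag) (t : St J).

Definition edge_target (e : edge) : St J :=
  match e with ETemp _ t => t | EEpi _ t => t end.

(* A path: a first state followed by a list of edges; a path with no edges is a state. *)
Record path := mkPath { pstart : St J; pedges : list edge }.

Definition plast (p : path) : St J :=
  fold_left (fun _ e => edge_target e) (pedges p) (pstart p).

Fixpoint valid_from (s : St J) (es : list edge) : Prop :=
  match es with
  | [] => True
  | ETemp a t :: es' => tr J a s = Some t /\ valid_from t es'
  | EEpi ag t :: es' => loc J ag s = loc J ag t /\ valid_from t es'
  end.

Definition valid_path (p : path) : Prop := valid_from (pstart p) (pedges p).

Definition is_temporal (e : edge) : Prop :=
  match e with ETemp _ _ => True | EEpi _ _ => False end.

Definition witness_path (s' : St J) (p : path) : Prop :=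
  init J (pstart p) /\ Forall is_temporal (pedges p) /\ valid_path p /\ plast p = s'.

End Paths.
Arguments ETemp {Ag J} a t.
Arguments EEpi {Ag J} ag t.
Arguments mkPath {Ag J} pstart pedges.

Section Rules.
Context {Ag : Type} (I It : IS Ag) (h : St I -> St It) (hA : Act I -> Act It).

Definition config := (path It * (St I -> Prop))%type.

Definition temporal_set (at_ : Act It) (t : St It) (st : St I -> Prop) : St I -> Prop :=
  fun x => (exists a s, hA a = at_ /\ st s /\ tr I a s = Some x) /\ h x = t.

Inductive step_t : config -> config -> Prop :=
| TemporalCheck : forall s at_ t rest st,
    step_t (mkPath s (ETemp at_ t :: rest), st) (mkPath t rest, temporal_set at_ t st).

Inductive star_t : config -> config -> Prop :=
| star_t_refl : forall c, star_t c c
| star_t_step : forall c1 c2 c3, step_t c1 c2 -> star_t c2 c3 -> star_t c1 c3.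

Section WithWitness.
Variable W : St It -> path It -> Prop.

Definition witness_set (t : St It) : St I -> Prop :=
  fun x => exists p X, W t p /\
    star_t (p, fun y => init I y /\ h y = pstart p) (mkPath t [], X) /\ X x.

Definition epistemic_set (ag : Ag) (t : St It) (st : St I -> Prop) : St I -> Prop :=
  fun x => witness_set t x /\ exists s, st s /\ loc I ag s = loc I ag x.

Inductive step_e : config -> config -> Prop :=
| EpistemicCheck : forall s ag t rest st,
    step_e (mkPath s (EEpi ag t :: rest), st) (mkPath t rest, epistemic_set ag t st).

Inductive star : config -> config -> Prop :=
| star_refl : forall c, star c c
| star_step_t : forall c1 c2 c3, step_t c1 c2 -> star c2 c3 -> star c1 c3
| star_step_e : forall c1 c2 c3, step_e c1 c2 -> star c2 c3 -> star c1 c3.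
End WithWitness.

(* concrete trace s_1 ... s_n matching the edges of the abstract path:
   concrete_trace s es ss, where s is the current concrete state and ss the
   following concrete states, one per edge *)
Fixpoint concrete_trace (s : St I) (es : list (edge It)) (ss : list (St I)) : Prop :=
  match es, ss with
  | [], [] => True
  | ETemp at_ t :: es', x :: ss' =>
      h x = t /\ (exists a, hA a = at_ /\ tr I a s = Some x) /\ concrete_trace x es' ss'
  | EEpi ag t :: es', x :: ss' =>
      h x = t /\ loc I ag s = loc I ag x /\ reachable I x /\ concrete_trace x es' ss'
  | _, _ => False
  end.

End Rules.

(* Main.v *)
Require Import Defs.
From Stdlib Require Import List.
Import ListNotations.

Lemma last_cons_aux (A : Type) (l : list A) (a d : A) : last (a :: l) d = last l a.
Proof.
  revert a d. induction l as [|b l IH]; intros a d; [reflexivity|].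
  change (last (b :: l) d = last (b :: l) a). rewrite (IH b d), (IH b a). reflexivity.
Qed.

Lemma wit_lemma (Ag : Type) (I It : IS Ag) (h : St I -> St It) (hA : Act I -> Act It) :
  forall c1 c2, star_t h hA c1 c2 ->
  (forall y, snd c1 y -> h y = pstart (fst c1) /\ reachable I y) ->
  forall y, snd c2 y -> h y = pstart (fst c2) /\ reachable I y.
Proof.
  intros c1 c2 H. induction H as [c|c1 c2 c3 Hs Hst IH]; intros Hc.
  - exact Hc.
  - apply IH. destruct Hs. simpl in *. intros y [[a [s0 [Ha [Hs0 Htr]]]] Hy].
    split; [exact Hy|]. eapply reach_step; [apply Hc; exact Hs0|exact Htr].
Qed.

Lemma main_lemma (Ag : Type) (I It : IS Ag) (h : St I -> St It) (hA : Act I -> Act It)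
  (W : St It -> path It -> Prop) :
  forall c1 c2, star h hA W c1 c2 ->
  forall s es st, c1 = (mkPath s es, st) -> forall t X, c2 = (mkPath t [], X) ->
  (forall y, st y -> h y = s) -> forall x, X x ->
  exists s1 ss, st s1 /\ last ss s1 = x /\ concrete_trace I h hA s1 es ss.
Proof.
  intros c1 c2 H. induction H as [c|c1 c2 c3 Hs Hst IH|c1 c2 c3 Hs Hst IH];
    intros s es st E1 t X E2 Hh x Hx.
  - subst. inversion E2; subst. exists x, []. simpl. auto.
  - destruct Hs. inversion E1; subst.
    edestruct (IH _ _ _ eq_refl _ _ eq_refl) as [s1' [ss' [Hs1 [Hl Htr]]]].
    + intros y [_ Hy]; exact Hy.
    + exact Hx.
    + destruct Hs1 as [[a [s0 [Ha [Hs0 Htr0]]]] Hy].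
      exists s0, (s1' :: ss'). split; [exact Hs0|]. split; [rewrite last_cons_aux; exact Hl|].
      simpl. split; [exact Hy|]. split; [exists a; auto|exact Htr].
  - destruct Hs. inversion E1; subst.
    edestruct (IH _ _ _ eq_refl _ _ eq_refl) as [s1' [ss' [Hs1 [Hl Htr]]]].
    + intros y [[p [Y [_ [HY HYy]]]] _].
      refine (proj1 (@wit_lemma _ _ _ h hA _ _ HY _ y HYy)).
      intros z [Hz1 Hz2]; split; [exact Hz2|apply reach_init; exact Hz1].
    + exact Hx.
    + destruct Hs1 as [[p [Y [_ [HY HYy]]]] [s0 [Hs0 Hl0]]].
      pose proof (@wit_lemma _ _ _ h hA _ _ HY) as Hw. simpl in Hw.
      destruct (Hw (fun z Hz => conj (proj2 Hz) (reach_init _ _ (proj1 Hz))) s1' HYy)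
        as [Hh1 Hr1].
      exists s0, (s1' :: ss'). split; [exact Hs0|]. split; [rewrite last_cons_aux; exact Hl|].
      simpl. auto.
Qed.

Theorem proposition4 (Ag : Type) (I It : IS Ag)
  (h : St I -> St It) (hA : Act I -> Act It)
  (W : St It -> path It -> Prop)
  (HW : forall t p, W t p -> witness_path t p)
  (pi : path It) (Hpi : valid_path pi)
  (st1 stn : St I -> Prop)
  (Hst1 : forall x, st1 x -> h x = pstart pi)
  (Hstar : star h hA W (pi, st1) (mkPath (plast pi) [], stn))
  (Hne : exists x, stn x) :
  exists (s1 : St I) (ss : list (St I)),
    st1 s1 /\ h s1 = pstart pi /\ stn (last ss s1) /\
    concrete_trace I h hA s1 (pedges pi) ss.
Proof.
  destruct Hne as [x Hx].
  destruct (@main_lemma _ _ _ h hA W _ _ Hstar (pstart pi) (pedges pi) st1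
     ltac:(destruct pi; reflexivity) _ _ eq_refl Hst1 x Hx) as [s1 [ss [H1 [H2 H3]]]].
  exists s1, ss. split; [exact H1|]. split; [apply Hst1; exact H1|].
  rewrite H2. auto.
Qed.
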